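(* Let $r\geq1$ be an integer, $(a_{\boldsymbol n})\in\mathbf C^{\mathbf N^r}$ and $\rho>0$ real. Suppose there is $\varepsilon>0$ such that the series $F(\boldsymbol z)=\prod_i(1-\rho z_i)\sum_{\boldsymbol n\in\mathbf N^r}a_{\boldsymbol n}\prod_iz_i^{n_i}$ converges absolutely on the domain $|z_i|\leq\rho^{-1}+\varepsilon$ ($i=1,\dots,r$). Let $\|F\|_{\rho^{-1}}=\max_{|\eta_i|=1}|F((\eta_i\rho^{-1})_i)|$. Then for all $\boldsymbol n\in\mathbf N^r$, $$|a_{\boldsymbol n}|\leq\prod_i(n_i+1)\,\|F\|_{\rho^{-1}}\,\rho^{\sum_in_i}.$$ *)

(* Defs.v *)
From mathcomp Require Import all_boot all_order all_algebra complex.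
From mathcomp Require Import all_classical all_reals all_analysis.
Import Order.TTheory GRing.Theory Num.Theory numFieldNormedType.Exports.
Local Open Scope ring_scope.
Local Open Scope complex_scope.

Set Implicit Arguments.
Unset Strict Implicit.
Unset Printing Implicit Defensive.

Section Defs.
Variable R : realType.
Local Notation C := R[i].
Variable r : nat.

Definition cabs (z : C) : R := Num.sqrt (@complex.Re R z ^+ 2 + @complex.Im R z ^+ 2).

Definition mono (z : 'I_r -> C) (n : 'I_r -> nat) : C := \prod_i z i ^+ n i.

Definition idxsum (n : 'I_r -> nat) : nat := (\sum_i n i)%N.

(* Coefficients of the power series
   F(z) = prod_i (1 - rho z_i) * sum_n a_n z^n, obtained by expanding the
   finite product: for each subset S of coordinates, the factor (-rho z_i)
   for i in S shifts the index n_i down by one. *)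
Definition Fcoef (rho : R) (a : ('I_r -> nat) -> C) (n : 'I_r -> nat) : C :=
  \sum_(S : {set 'I_r} | [forall i in S, 0 < n i]%N)
     (- rho%:C) ^+ #|S| * a (fun i => if i \in S then (n i).-1 else n i).

Definition Fpartial (rho : R) (a : ('I_r -> nat) -> C) (z : 'I_r -> C)
    (N : nat) : C :=
  \sum_(m : {ffun 'I_r -> 'I_N.+1})
     Fcoef rho a (fun i => nat_of_ord (m i)) * mono z (fun i => nat_of_ord (m i)).

Definition Fabspartial (rho : R) (a : ('I_r -> nat) -> C) (z : 'I_r -> C)
    (N : nat) : R :=
  \sum_(m : {ffun 'I_r -> 'I_N.+1})
     cabs (Fcoef rho a (fun i => nat_of_ord (m i))) *
     \prod_i cabs (z i) ^+ nat_of_ord (m i).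

(* absolute convergence of the series of F at z: the (nonnegative) terms
   |b_n z^n| are summable over N^r, i.e. the box partial sums are bounded *)
Definition F_abs_conv (rho : R) (a : ('I_r -> nat) -> C) (z : 'I_r -> C) : Prop :=
  exists M : R, forall N, Fabspartial rho a z N <= M.

Definition Fval (rho : R) (a : ('I_r -> nat) -> C) (z : 'I_r -> C) : C :=
  (limn (fun N => @complex.Re R (Fpartial rho a z N)))
    +i* (limn (fun N => @complex.Im R (Fpartial rho a z N))).

Definition Fnorm (rho : R) (a : ('I_r -> nat) -> C) : R :=
  sup [set x : R | exists eta : 'I_r -> C,
         (forall i, cabs (eta i) = 1) /\
         x = cabs (Fval rho a (fun i => eta i * (rho^-1)%:C))].

End Defs.

(* Main.v *)
Require Import Defs.
From mathcomp Require Import all_boot all_order all_algebra complex.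
From mathcomp Require Import all_classical all_reals all_analysis.
From mathcomp Require Import ring lra zify.
From mathcomp Require Import cyclic separable cyclotomic.
Import Order.TTheory GRing.Theory Num.Theory.
Import numFieldNormedType.Exports.
Local Open Scope ring_scope.
Local Open Scope complex_scope.

Section Basics.
Variable R : realType.
Local Notation C := R[i].

Lemma cabsC (z : C) : (cabs z)%:C = `|z|.
Proof. by rewrite normc_def. Qed.

Lemma cabs_ge0 (z : C) : 0 <= cabs z.
Proof. by rewrite /cabs sqrtr_ge0. Qed.

Lemma cabsM (x y : C) : cabs (x * y) = cabs x * cabs y.
Proof. by apply: complexI; rewrite rmorphM /= !cabsC normrM. Qed.

Lemma cabsX (x : C) n : cabs (x ^+ n) = cabs x ^+ n.
Proof. by apply: complexI; rewrite rmorphXn /= !cabsC normrX. Qed.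

Lemma cabsR (c : R) : cabs c%:C = `|c|.
Proof. rewrite /cabs /= expr0n /= addr0. by rewrite sqrtr_sqr. Qed.

Lemma cabsD (x y : C) : cabs (x + y) <= cabs x + cabs y.
Proof. by rewrite -lecR rmorphD /= !cabsC ler_normD. Qed.

Lemma cabsB (x y : C) : cabs (x - y) = cabs (y - x).
Proof. by apply: complexI; rewrite !cabsC distrC. Qed.

Lemma cabs_sum (I : Type) (s : seq I) (P : pred I) (F : I -> C) :
  cabs (\sum_(i <- s | P i) F i) <= \sum_(i <- s | P i) cabs (F i).
Proof.
rewrite -lecR rmorph_sum cabsC.
apply: le_trans (ler_norm_sum _ _ _) _.
by rewrite le_eqVlt; apply/orP; left; apply/eqP/eq_bigr => i _; exact: (esym (cabsC _)).
Qed.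

Lemma cabs_prod (I : Type) (s : seq I) (P : pred I) (F : I -> C) :
  cabs (\prod_(i <- s | P i) F i) = \prod_(i <- s | P i) cabs (F i).
Proof. by apply: complexI; rewrite rmorph_prod /= cabsC normr_prod; apply: eq_bigr => i _; rewrite cabsC. Qed.

Lemma Re_le_cabs (z : C) : `|complex.Re z| <= cabs z.
Proof.
rewrite /cabs -sqrtr_sqr; apply: ler_wsqrtr; rewrite lerDl sqr_ge0 //.
Qed.

Lemma Im_le_cabs (z : C) : `|complex.Im z| <= cabs z.
Proof.
rewrite /cabs -sqrtr_sqr; apply: ler_wsqrtr; rewrite lerDr sqr_ge0 //.
Qed.

Lemma prim_root_exists (n : nat) : (0 < n)%N -> exists z : C, n.-primitive_root z.
Proof.
pose p : {poly C} := 'X^n - 1; have [rs Dp] := closed_field_poly_normal p.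
move=> n_gt0; rewrite (monicP _) ?monicXnsubC // scale1r in Dp.
have rn1: all n.-unity_root rs by apply/allP=> z; rewrite -root_prod_XsubC -Dp.
have sz_r: (n < (size rs).+1)%N.
  by rewrite -(size_prod_XsubC rs id) -Dp size_XnsubC.
have [|z] := hasP (has_prim_root n_gt0 rn1 _ sz_r); last by exists z.
by rewrite -separable_prod_XsubC -Dp separable_Xn_sub_1 // pnatr_eq0 -lt0n.
Qed.

End Basics.


Set Implicit Arguments.
Unset Strict Implicit.
Unset Printing Implicit Defensive.

Section PartA.
Variable R : realType.
Local Notation C := R[i].
Variable r : nat.

Lemma subsets_alt (A : {set 'I_r}) :
  \sum_(S : {set 'I_r} | S \subset A) (-1 : C) ^+ #|S| = (A == finset.set0)%:R.
Proof.
have [->|/finset.set0Pn [i0 Hi0]] := eqVneq A finset.set0.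
    rewrite (big_pred1 finset.set0); first by rewrite cards0 expr0.
  by move=> S /=; rewrite finset.subset0.
pose t := fun S : {set 'I_r} => if i0 \in S then S :\ i0 else i0 |: S.
have tK : involutive t.
  move=> S; rewrite /t; case: (boolP (i0 \in S)) => H.
    by rewrite finset.setD11 finset.setD1K.
  by rewrite finset.setU11 finset.setU1K.
have Ht : forall S, (t S \subset A) = (S \subset A).
  move=> S; rewrite /t; case: (boolP (i0 \in S)) => H.
    apply/fintype.subsetP/fintype.subsetP => HS x.
      by move=> Hx; case: (eqVneq x i0) => [->//|ne]; apply: HS; rewrite finset.in_setD1 ne.
    by rewrite finset.in_setD1 => /andP [_ /HS].
  apply/fintype.subsetP/fintype.subsetP => HS x.
    by move=> Hx; apply: HS; rewrite finset.in_setU1 Hx orbT.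
  by rewrite finset.in_setU1 => /orP [/eqP ->|/HS].
have Hf : forall S, (-1 : C) ^+ #|t S| = - (-1) ^+ #|S|.
  move=> S; rewrite /t; case: (boolP (i0 \in S)) => H.
    by rewrite [in RHS](finset.cardsD1 i0 S) H add1n exprS mulN1r opprK.
  by rewrite finset.cardsU1 H add1n exprS mulN1r.
set x := \sum_(S | _) _.
have Ex : x = - x.
  rewrite {1}/x (reindex_inj (inv_inj tK)) /= /x -sumrN.
  by apply: eq_big => S; [exact: Ht | move=> _; exact: Hf].
have : x *+ 2 == 0 by rewrite mulr2n {1}Ex addNr.
by rewrite mulrn_eq0 /= => /eqP ->.
Qed.


Notation vm k := (fun i => nat_of_ord (k i)).

Lemma inordV L m : ((inord m : 'I_L.+1) : nat) = if (m < L.+1)%N then m else 0%N.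
Proof. by rewrite /inord val_insubd. Qed.

Definition addS L (S : {set 'I_r}) (k : {ffun 'I_r -> 'I_L.+1}) : {ffun 'I_r -> 'I_L.+1} :=
  [ffun i => inord (k i + (i \in S))].
Definition subS L (S : {set 'I_r}) (k : {ffun 'I_r -> 'I_L.+1}) : {ffun 'I_r -> 'I_L.+1} :=
  [ffun i => inord (k i - (i \in S))].

Arguments addS {L}.
Arguments subS {L}.

Section Inv.
Variables (a : ('I_r -> nat) -> C) (rho : R) (n : 'I_r -> nat) (L : nat).
Hypothesis HL : forall i, (n i < L)%N.

Definition Qp (S : {set 'I_r}) (k : {ffun 'I_r -> 'I_L.+1}) :=
  [forall i, (k i <= n i)%N] && [forall i in S, (k i < n i)%N].
Definition Pp (S : {set 'I_r}) (k : {ffun 'I_r -> 'I_L.+1}) :=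
  [forall i, (k i <= n i)%N] && [forall i in S, (0 < k i)%N].

Lemma addS_val S j : Qp S j -> forall i : 'I_r, (addS S j i : nat) = (j i + nat_of_bool (i \in S))%N.
Proof.
case/andP => /forallP H1 /forall_inP H2 i; rewrite ffunE inordV.
case: (boolP (i \in S)) => Hi /=.
  by have := H2 i Hi; have := HL i; case: ifP => //; lia.
by have := H1 i; have := HL i; case: ifP => //; lia.
Qed.

Lemma pred_eq S j : Pp S (addS S j) && (subS S (addS S j) == j) = Qp S j.
Proof.
apply/idP/idP.
  case/andP => /andP [/forallP H1 /forall_inP H2] _.
  apply/andP; split.
    apply/forallP => i; have := H1 i; rewrite ffunE inordV.
    case: (boolP (i \in S)) => Hi /=.
      have := H2 i Hi; rewrite ffunE inordV Hi /=.
      by case: ifP => //; lia.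
    have := ltn_ord (j i); case: ifP => //; lia.
  apply/forall_inP => i Hi; have := H1 i; have := H2 i Hi; rewrite !ffunE !inordV Hi /=.
  by case: ifP => //; lia.
move=> HQ; have Hv := addS_val HQ.
case/andP: (HQ) => /forallP H1 /forall_inP H2.
apply/andP; split; [apply/andP; split|].
- apply/forallP => i; rewrite Hv; case: (boolP (i \in S)) => Hi /=.
    by have := H2 i Hi; lia.
  by have := H1 i; lia.
- apply/forall_inP => i Hi; rewrite Hv Hi; lia.
- apply/eqP/ffunP => i; apply: val_inj => /=; rewrite ffunE inordV Hv addnK.
  by rewrite ltn_ord.
Qed.

Lemma addS_subS S m : Pp S m -> addS S (subS S m) = m.
Proof.
case/andP => _ /forall_inP H2; apply/ffunP => i; apply: val_inj => /=.
rewrite !ffunE !inordV; case: (boolP (i \in S)) => Hi /=.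
  have := H2 i Hi; have := ltn_ord (m i); case: ifP => /=; case: ifP => //; lia.
have := ltn_ord (m i); rewrite subn0 addn0; case: ifP => //=; rewrite ?ltn_ord //; lia.
Qed.

Lemma sum_inS (S : {set 'I_r}) : (\sum_i nat_of_bool (i \in S))%N = #|S|.
Proof.
rewrite -sum1_card [in RHS]big_mkcond /=; apply: eq_bigr => i _; by case: (i \in S).
Qed.

Lemma idxsum_addS S j : Qp S j -> idxsum (vm (addS S j)) = (idxsum (vm j) + #|S|)%N.
Proof.
move=> HQ; rewrite /idxsum (eq_bigr _ (fun i _ => addS_val HQ i)) big_split /=.
by rewrite sum_inS.
Qed.

Lemma idxsum_le S j : Qp S j -> (idxsum (vm j) + #|S| <= idxsum n)%N.
Proof.
move=> HQ; rewrite -idxsum_addS //; rewrite /idxsum; apply: leq_sum => i _.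
case/andP: (HQ) => /forallP H1 /forall_inP H2.
rewrite (addS_val HQ); case: (boolP (i \in S)) => Hi /=.
  by have := H2 i Hi; lia.
by have := H1 i; lia.
Qed.

Lemma inversion :
  a n = \sum_(k : {ffun 'I_r -> 'I_L.+1} | [forall i, (k i <= n i)%N])
           rho%:C ^+ (idxsum n - idxsum (vm k)) * Fcoef rho a (vm k).
Proof.
pose T (k : {ffun 'I_r -> 'I_L.+1}) (S : {set 'I_r}) :=
  rho%:C ^+ (idxsum n - idxsum (vm k)) *
  ((- rho%:C) ^+ #|S| * a (fun i => if i \in S then (k i).-1 else k i)).
pose U (k : {ffun 'I_r -> 'I_L.+1}) (S : {set 'I_r}) :=
  (-1) ^+ #|S| * (rho%:C ^+ (idxsum n - idxsum (vm k)) * a (vm k)).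
have E1 : \sum_(k : {ffun 'I_r -> 'I_L.+1} | [forall i, (k i <= n i)%N])
           rho%:C ^+ (idxsum n - idxsum (vm k)) * Fcoef rho a (vm k) =
  \sum_k \sum_S (if Pp S k then T k S else 0).
  rewrite big_mkcond; apply: eq_bigr => k _; case: ifP => Hk.
    rewrite /Fcoef big_distrr big_mkcond /=; apply: eq_bigr => S _.
    by rewrite /Pp Hk /=.
  by rewrite big1 // => S _; rewrite /Pp Hk.
rewrite E1 exchange_big /=.
have E2 : forall S, \sum_k (if Pp S k then T k S else 0) =
                    \sum_k (if Qp S k then U k S else 0).
  move=> S; rewrite -!big_mkcond (reindex_onto (addS S) (subS S)); last first.
    by move=> m; apply: addS_subS.
  apply: eq_big => j; first by rewrite pred_eq.
  rewrite pred_eq => HQ; rewrite /T /U idxsum_addS //.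
  have -> : (fun i => if i \in S then (addS S j i : nat).-1 else addS S j i) = vm j.
    by apply: funext => i; rewrite addS_val //; case: (i \in S); rewrite ?addn1 ?addn0.
  have Hle := idxsum_le HQ.
  have -> : (idxsum n - idxsum (vm j) = (idxsum n - (idxsum (vm j) + #|S|)) + #|S|)%N.
    rewrite subnDA subnK // leq_subRL //; apply: leq_trans Hle; exact: leq_addr.
  rewrite exprD -[- rho%:C]mulN1r exprMn; ring.
rewrite (eq_bigr _ (fun S _ => E2 S)) exchange_big /=.
pose A (k : {ffun 'I_r -> 'I_L.+1}) := [set i | (k i < n i)%N].
rewrite (eq_bigr (fun k : {ffun 'I_r -> 'I_L.+1} => if [forall i, (k i <= n i)%N] then
    rho%:C ^+ (idxsum n - idxsum (vm k)) * a (vm k) * (A k == finset.set0)%:R else 0)); last first.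
  move=> k _; case: ifP => Hk; last by rewrite big1 // => S _; rewrite /Qp Hk.
  rewrite -subsets_alt mulr_sumr -big_mkcond /=; apply: eq_big => S.
    rewrite /Qp Hk /=; apply/forall_inP/fintype.subsetP => H i Hi.
      by rewrite finset.inE; apply: H.
    by have := H i Hi; rewrite finset.inE.
  by move=> _; rewrite /U mulrC.
pose n0 : {ffun 'I_r -> 'I_L.+1} := [ffun i => inord (n i)].
have Hn0 : forall i, (n0 i : nat) = n i.
  by move=> i; rewrite ffunE inordV; have := HL i; case: ifP => //; lia.
rewrite (bigD1 n0) //=.
rewrite big1 ?addr0; last first.
  move=> k Hk; case: ifP => // Hk'; case: eqP => [HA|]; last by rewrite mulr0.
  exfalso; move: Hk => /eqP; apply; apply/ffunP => i; apply: val_inj => /=.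
  rewrite Hn0; move/forallP: Hk' => /(_ i) Hki.
  have : i \notin A k by rewrite HA finset.in_set0.
  rewrite finset.inE; lia.
have -> : [forall i, (n0 i <= n i)%N] by apply/forallP => i; rewrite Hn0.
have -> : vm n0 = n by apply: funext => i; rewrite Hn0.
have -> : A n0 == finset.set0.
  apply/eqP/finset.setP => i; rewrite finset.inE finset.in_set0 Hn0; lia.
by rewrite subnn expr0 mul1r mulr1.
Qed.

End Inv.
End PartA.


Notation vm k := (fun i => nat_of_ord (k i)).

Section PartB.
Variable R : realType.
Local Notation C := R[i].
Variable r : nat.

Lemma BOX (V : zmodType) (T : ('I_r -> nat) -> V) N L (HNL : (N <= L)%N) :
  \sum_(m : {ffun 'I_r -> 'I_N.+1}) T (vm m) =
  \sum_(m : {ffun 'I_r -> 'I_L.+1} | [forall i, (m i <= N)%N]) T (vm m).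
Proof.
have HNL' : (N.+1 <= L.+1)%N by [].
pose h (m : {ffun 'I_r -> 'I_N.+1}) : {ffun 'I_r -> 'I_L.+1} :=
  [ffun i => widen_ord HNL' (m i)].
pose h' (m : {ffun 'I_r -> 'I_L.+1}) : {ffun 'I_r -> 'I_N.+1} :=
  [ffun i => inord (m i)].
symmetry; rewrite (reindex_onto h h'); last first.
  move=> m /forallP Hm; apply/ffunP => i; apply: val_inj => /=.
  rewrite !ffunE /= inordV; have := Hm i; case: ifP => //; lia.
have Hv : forall m i, (h m i : nat) = m i by move=> m i; rewrite ffunE.
apply: eq_big => m.
  have -> : [forall i, (h m i <= N)%N].
    by apply/forallP => i; rewrite Hv -ltnS ltn_ord.
  apply/eqP/ffunP => i; apply: val_inj => /=; rewrite !ffunE /= inordV ltn_ord //.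
move=> _; congr T; apply: funext => i; exact: Hv.
Qed.


Section Seq.
Variables (a : ('I_r -> nat) -> C) (rho : R).

Lemma term_le (z : 'I_r -> C) (n : 'I_r -> nat) :
  cabs (Fcoef rho a n * mono z n) = cabs (Fcoef rho a n) * \prod_i cabs (z i) ^+ n i.
Proof. by rewrite cabsM /mono cabs_prod; congr (_ * _); apply: eq_bigr => i _; rewrite cabsX. Qed.

Lemma Fabs_ge0 z N : 0 <= Fabspartial rho a z N.
Proof.
by apply: sumr_ge0 => m _; apply: mulr_ge0; [exact: cabs_ge0|apply: prodr_ge0 => i _; apply: exprn_ge0; exact: cabs_ge0].
Qed.

Lemma Fabs_mono z N N' : (N <= N')%N -> Fabspartial rho a z N <= Fabspartial rho a z N'.
Proof.
move=> HN; rewrite /Fabspartial (BOX (fun n => cabs (Fcoef rho a n) * \prod_i cabs (z i) ^+ n i) HN).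
rewrite [X in _ <= X](bigID [pred m : {ffun 'I_r -> 'I_N'.+1} | [forall i, (m i <= N)%N]]) /= lerDl.
by apply: sumr_ge0 => m _; apply: mulr_ge0; [exact: cabs_ge0|apply: prodr_ge0 => i _; apply: exprn_ge0; exact: cabs_ge0].
Qed.

Lemma Fpart_diff z N N' : (N <= N')%N ->
  cabs (Fpartial rho a z N' - Fpartial rho a z N) <=
  Fabspartial rho a z N' - Fabspartial rho a z N.
Proof.
move=> HN; rewrite /Fpartial /Fabspartial.
rewrite (BOX (fun n => cabs (Fcoef rho a n) * \prod_i cabs (z i) ^+ n i) HN).
rewrite (BOX (fun n => Fcoef rho a n * mono z n) HN).
rewrite [X in cabs (X - _)](bigID [pred m : {ffun 'I_r -> 'I_N'.+1} | [forall i, (m i <= N)%N]]) /=.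
rewrite [X in _ <= X - _](bigID [pred m : {ffun 'I_r -> 'I_N'.+1} | [forall i, (m i <= N)%N]]) /=.
rewrite addrAC subrr add0r.
rewrite [X in _ <= X]addrAC subrr add0r.
apply: le_trans (cabs_sum _ _ _ _ _) _.
by rewrite le_eqVlt; apply/orP; left; apply/eqP; apply: eq_bigr => m _; rewrite term_le.
Qed.

Lemma Fpart_le z N : cabs (Fpartial rho a z N) <= Fabspartial rho a z N.
Proof.
apply: le_trans (cabs_sum _ _ _ _ _) _.
by rewrite le_eqVlt; apply/orP; left; apply/eqP; apply: eq_bigr => m _; rewrite term_le.
Qed.


Lemma ReB (x y : C) : complex.Re (x - y) = complex.Re x - complex.Re y.
Proof. by case: x => ? ?; case: y. Qed.
Lemma ImB (x y : C) : complex.Im (x - y) = complex.Im x - complex.Im y.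
Proof. by case: x => ? ?; case: y. Qed.

Lemma cvg_aux (x s : nat -> R) M :
  {homo s : n m / (n <= m)%N >-> n <= m} -> (forall N, s N <= M) ->
  (forall N N', (N <= N')%N -> `|x N' - x N| <= s N' - s N) -> cvgn x.
Proof.
move=> sh sM H.
have ys : {homo (fun N => x N + s N) : n m / (n <= m)%N >-> n <= m}.
  move=> n m nm; have := H _ _ nm; rewrite ler_norml => /andP [H1 _]; lra.
have yb : has_ubound (range (fun N => x N + s N)).
  exists (x 0%N - s 0%N + M + M) => _ [N _ <-].
  have := H 0%N N (leq0n N); rewrite ler_norml => /andP [_ H2].
  have := sM N; have := sh 0%N N (leq0n N); lra.
have cy := nondecreasing_is_cvgn ys yb.
have cs : cvgn s.
  by apply: nondecreasing_is_cvgn sh _; exists M => _ [N _ <-]; exact: sM.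
have -> : x = (fun N => x N + s N) - s.
  by apply: funext => N /=; rewrite addrK.
exact: is_cvgB cy cs.
Qed.

Lemma Re_cvg z : F_abs_conv rho a z -> cvgn (fun N => complex.Re (Fpartial rho a z N)).
Proof.
case=> M HM; apply: (@cvg_aux _ (Fabspartial rho a z) M) => //.
  by move=> n m; apply: Fabs_mono.
move=> N N' HN; rewrite -ReB; apply: le_trans (Re_le_cabs _ _) _.
exact: Fpart_diff.
Qed.

Lemma Im_cvg z : F_abs_conv rho a z -> cvgn (fun N => complex.Im (Fpartial rho a z N)).
Proof.
case=> M HM; apply: (@cvg_aux _ (Fabspartial rho a z) M) => //.
  by move=> n m; apply: Fabs_mono.
move=> N N' HN; rewrite -ImB; apply: le_trans (Im_le_cabs _ _) _.
exact: Fpart_diff.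
Qed.

Lemma cabs_cvg z : F_abs_conv rho a z ->
  ((fun N => cabs (Fpartial rho a z N)) @ \oo --> cabs (Fval rho a z))%classic.
Proof.
move=> Hz; have cR := Re_cvg Hz; have cI := Im_cvg Hz.
rewrite /cabs /Fval /=.
apply: (@cvg_comp _ _ _ (fun N => complex.Re (Fpartial rho a z N) ^+ 2 + complex.Im (Fpartial rho a z N) ^+ 2) Num.sqrt _ (nbhs (limn (fun N => complex.Re (Fpartial rho a z N)) ^+ 2 + limn (fun N => complex.Im (Fpartial rho a z N)) ^+ 2))); last exact: sqrt_continuous.
rewrite !expr2.
by apply: cvgD; apply: cvgM.
Qed.

Lemma Fval_le z M : F_abs_conv rho a z -> (forall N, Fabspartial rho a z N <= M) ->
  cabs (Fval rho a z) <= M.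
Proof.
move=> Hz HM.
apply: (ler_cvg_to (cabs_cvg Hz) (cvg_cst M)).
by apply: nearW => N; apply: le_trans (Fpart_le _ _) (HM N).
Qed.
End Seq.

Section Fourier.
Variables (a : ('I_r -> nat) -> C) (rho : R).

Lemma GEO (w : C) K (Hw : K.-primitive_root w) d :
  \sum_(t < K) (w ^+ d) ^+ t = K%:R * (nat_of_bool (K %| d)%N)%:R.
Proof.
case: (boolP (K %| d)%N) => Hd.
  have -> : w ^+ d = 1 by apply/eqP; rewrite -(prim_order_dvd Hw).
  under eq_bigr do rewrite expr1n.
  by rewrite sumr_const card_ord mulr1.
have Hx : w ^+ d != 1 by rewrite -(prim_order_dvd Hw).
have HK : (w ^+ d) ^+ K = 1 by rewrite -exprM mulnC exprM (prim_expr_order Hw) expr1n.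
have : (w ^+ d - 1) * \sum_(t < K) (w ^+ d) ^+ t = 0 by rewrite -subrX1 HK subrr.
by move/eqP; rewrite mulf_eq0 subr_eq0 (negbTE Hx) /= => /eqP ->; rewrite mulr0.
Qed.

Lemma factor_id (w c : C) (t e f : nat) :
  (w ^+ t * c) ^+ e * w ^+ (t * f) = c ^+ e * (w ^+ (e + f)) ^+ t.
Proof.
by rewrite exprMn -!exprM mulrAC -exprD mulrC -mulnDr mulnC.
Qed.

Lemma prod_bool (I : finType) (P : pred I) :
  \prod_i ((nat_of_bool (P i))%:R : C) = (nat_of_bool [forall i, P i])%:R.
Proof.
case: (boolP [forall i, P i]) => H.
  by rewrite big1 // => i _; move/forallP: H => ->.
move/forallPn: H => [i Hi]; rewrite (bigD1 i) //= (negbTE Hi) mul0r //.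
Qed.

Lemma ID (m : 'I_r -> nat) K (w : C) (Hw : K.-primitive_root w) N :
  \sum_(j : {ffun 'I_r -> 'I_K})
     Fpartial rho a (fun i => w ^+ j i * (rho^-1)%:C) N * \prod_i w ^+ (j i * (K - m i))
  = K%:R ^+ r * \sum_(m' : {ffun 'I_r -> 'I_N.+1})
      Fcoef rho a (vm m') * ((rho^-1) ^+ idxsum (vm m'))%:C *
      (nat_of_bool [forall i, (K %| m' i + (K - m i))%N])%:R.
Proof.
rewrite /Fpartial; under eq_bigr do rewrite mulr_suml.
rewrite exchange_big mulr_sumr /=; apply: eq_bigr => m' _.
under eq_bigr do rewrite -mulrA /mono -big_split /=.
under eq_bigr do under eq_bigr do rewrite factor_id.
under eq_bigr do rewrite big_split /=.
rewrite -mulr_sumr -mulr_sumr.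
rewrite -(bigA_distr_bigA (fun i (t : 'I_K) => (w ^+ (m' i + (K - m i))) ^+ t)) /=.
have -> : \prod_(i < r) \sum_(j < K) (w ^+ (m' i + (K - m i))) ^+ j =
  \prod_(i < r) (K%:R * (nat_of_bool (K %| m' i + (K - m i))%N)%:R).
  by apply: eq_bigr => i _; exact: GEO.
rewrite big_split /= prodr_const card_ord (prod_bool (fun i => (K %| m' i + (K - m i))%N)).
rewrite prodrXr rmorphXn /=.
rewrite /idxsum; ring.
Qed.

End Fourier.

Lemma cvg_fsum (J : finType) (f : J -> nat -> R) (l : J -> R) :
  (forall j, (f j @ \oo --> l j)%classic) ->
  ((fun N => \sum_j f j N) @ \oo --> \sum_j l j)%classic.
Proof.
move=> H.
suff : forall s : seq J, ((fun N => \sum_(j <- s) f j N) @ \oo --> \sum_(j <- s) l j)%classic.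
  by apply.
elim => [|j s IH].
  under eq_cvg do rewrite big_nil; rewrite big_nil; exact: cvg_cst.
under eq_cvg do rewrite big_cons; rewrite big_cons; exact: cvgD.
Qed.

Lemma sum_pred_le (J : finType) (P : pred J) (F : J -> R) :
  (forall j, 0 <= F j) -> \sum_(j | P j) F j <= \sum_j F j.
Proof.
move=> H; rewrite [X in _ <= X](bigID P) /= lerDl; exact: sumr_ge0.
Qed.

Lemma kdiv (mi mi' K : nat) : (mi < K)%N -> (K %| mi' + (K - mi))%N -> mi' != mi -> (K <= mi')%N.
Proof.
move=> H1 /dvdnP [c Hc] /eqP H2; case: c Hc => [|[|c]] Hc; rewrite ?mulSn in Hc; lia.
Qed.

Section Cauchy.
Variables (a : ('I_r -> nat) -> C) (rho : R).
Hypothesis hrho : 0 < rho.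
Hypothesis heps : exists eps : R, 0 < eps /\
     forall z : 'I_r -> R[i], (forall i, cabs (z i) <= rho^-1 + eps) ->
       F_abs_conv rho a z.

Lemma Hconv (eta : 'I_r -> C) : (forall i, cabs (eta i) = 1) ->
  F_abs_conv rho a (fun i => eta i * (rho^-1)%:C).
Proof.
have [eps [eps0 Hc]] := heps; move=> He; apply: Hc => i.
by rewrite cabsM He cabsR ger0_norm ?mul1r ?lerDl ?ltW // invr_gt0.
Qed.

Lemma Fnorm_ge (eta : 'I_r -> C) : (forall i, cabs (eta i) = 1) ->
  cabs (Fval rho a (fun i => eta i * (rho^-1)%:C)) <= Fnorm rho a.
Proof.
move=> He.
have [eps [eps0 Hc]] := heps.
have [M0 HM0] : F_abs_conv rho a (fun _ => (rho^-1)%:C).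
  by apply: Hc => i; rewrite cabsR ger0_norm ?lerDl ?ltW // invr_gt0.
have key : forall eta' : 'I_r -> C, (forall i, cabs (eta' i) = 1) ->
    cabs (Fval rho a (fun i => eta' i * (rho^-1)%:C)) <= M0.
  move=> eta' He'; apply: Fval_le; first exact: Hconv.
  move=> N; apply: le_trans (HM0 N); rewrite le_eqVlt; apply/orP; left; apply/eqP.
  rewrite /Fabspartial; apply: eq_bigr => m _; congr (_ * _); apply: eq_bigr => i _.
  by rewrite cabsM He' mul1r.
rewrite /Fnorm; apply: ub_le_sup.
  by exists M0 => _ [eta' [H1 ->]]; exact: key.
by exists eta; split.
Qed.

Lemma cauchy_est (m : 'I_r -> nat) :
  cabs (Fcoef rho a m) <= Fnorm rho a * rho ^+ idxsum m.
Proof.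
have [eps [eps0 Hc]] := heps.
set rr := rho^-1.
have rr0 : 0 < rr by rewrite invr_gt0.
set R1 := rr + eps.
have R10 : 0 < R1 by rewrite /R1 addr_gt0.
set q := rr / R1.
have q0 : 0 <= q by rewrite divr_ge0 // ltW.
have q1 : q < 1 by rewrite /q ltr_pdivrMr // mul1r /R1 ltrDl.
have qR1 : q * R1 = rr by rewrite /q divfK // gt_eqF.
have [M1 HM1] : F_abs_conv rho a (fun _ => R1%:C).
  apply: Hc => i; rewrite cabsR ger0_norm; [exact: lexx | exact: ltW].
set x := cabs (Fcoef rho a m) * rr ^+ idxsum m.
suff Hx : x <= Fnorm rho a.
  have -> : cabs (Fcoef rho a m) = x * rho ^+ idxsum m.
    by rewrite /x -mulrA -exprMn mulVf ?gt_eqF // expr1n mulr1.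
  by rewrite ler_wpM2r // exprn_ge0 // ltW.
pose K0 := (idxsum m).+1.
have step : forall K, (K0 <= K)%N -> x <= Fnorm rho a + M1 * q ^+ K.
  move=> K HK.
  have Km : forall i, (m i < K)%N.
    move=> i; apply: leq_trans HK; rewrite ltnS /idxsum (bigD1 i) //=; exact: leq_addr.
  have K0p : (0 < K)%N by apply: leq_trans HK.
  have [w Hw] := @prim_root_exists R K K0p.
  have w1 : cabs w = 1.
    apply: complexI; rewrite cabsC; apply/eqP.
    rewrite -(pexpr_eq1 K0p) // -normrX (prim_expr_order Hw) normr1 //.
  pose z (j : {ffun 'I_r -> 'I_K}) := fun i => w ^+ j i * rr%:C.
  have Hj : forall (j : {ffun 'I_r -> 'I_K}) i, cabs (w ^+ j i) = 1.
    by move=> j i; rewrite cabsX w1 expr1n.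
  pose KR := (K%:R : R) ^+ r.
  have KR0 : 0 < KR by rewrite exprn_gt0 // ltr0n.
  have stepN : forall N, (K0 <= N)%N ->
      x <= KR^-1 * \sum_j cabs (Fpartial rho a (z j) N) + M1 * q ^+ K.
    move=> N HN.
    have mN : forall i, (m i < N.+1)%N.
      move=> i; rewrite ltnS; apply: leq_trans (ltnW HN).
      by rewrite /idxsum (bigD1 i) //=; exact: leq_addr.
    pose dl (m' : {ffun 'I_r -> 'I_N.+1}) := [forall i, (K %| m' i + (K - m i))%N].
    pose X := \sum_(m' : {ffun 'I_r -> 'I_N.+1})
      Fcoef rho a (vm m') * (rr ^+ idxsum (vm m'))%:C * (nat_of_bool (dl m'))%:R.
    have HID := ID a rho m Hw N.
    have HX : cabs X <= KR^-1 * \sum_j cabs (Fpartial rho a (z j) N).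
      rewrite ler_pdivlMl //.
      have -> : KR * cabs X = cabs ((K%:R : C) ^+ r * X).
        by rewrite cabsM cabsX -(rmorph_nat (real_complex R)) cabsR normr_nat.
      rewrite /X -HID; apply: le_trans (cabs_sum _ _ _ _ _) _.
      apply: ler_sum => j _; rewrite cabsM cabs_prod.
      rewrite big1 ?mulr1 // => i _; by rewrite cabsX w1 expr1n.
    pose m0 : {ffun 'I_r -> 'I_N.+1} := [ffun i => inord (m i)].
    have Hm0 : forall i, (m0 i : nat) = m i.
      by move=> i; rewrite ffunE inordV mN.
    pose T := \sum_(m' | m' != m0)
      Fcoef rho a (vm m') * (rr ^+ idxsum (vm m'))%:C * (nat_of_bool (dl m'))%:R.
    have XT : X = Fcoef rho a m * (rr ^+ idxsum m)%:C + T.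
      rewrite /X (bigD1 m0) //=; congr (_ + _).
      have -> : vm m0 = m by apply: funext => i; rewrite Hm0.
      have -> : dl m0 by apply/forallP => i; rewrite Hm0 subnKC ?dvdnn // ltnW.
      by rewrite mulr1.
    have Hx1 : x = cabs (X - T).
      by rewrite XT addrK /x cabsM cabsR ger0_norm // exprn_ge0 // ltW.
    have HT : cabs T <= M1 * q ^+ K.
      apply: le_trans (cabs_sum _ _ _ _ _) _.
      apply: (le_trans (y := \sum_(m' | m' != m0) q ^+ K *
         (cabs (Fcoef rho a (vm m')) * \prod_i cabs (R1%:C) ^+ m' i))).
        apply: ler_sum => m' Hne.
        rewrite !cabsM cabsR (ger0_norm (exprn_ge0 _ (ltW rr0))).
        rewrite -(rmorph_nat (real_complex R)) cabsR normr_nat.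
        have -> : \prod_i cabs R1%:C ^+ m' i = R1 ^+ idxsum (vm m').
          by rewrite cabsR (ger0_norm (ltW R10)) prodrXr.
        case: (boolP (dl m')) => Hd /=; last first.
          rewrite mulr0; apply: mulr_ge0; first exact: exprn_ge0.
          by apply: mulr_ge0; [exact: cabs_ge0 | apply: exprn_ge0; exact: ltW].
        rewrite mulr1.
        have [i Hi] : exists i, (m' i : nat) != m i.
          case: (boolP [exists i, (m' i : nat) != m i]) => [/existsP //|/existsPn Hall].
          exfalso; move/eqP: Hne; apply; apply/ffunP => i; apply: val_inj => /=.
          by rewrite Hm0; apply/eqP; move: (Hall i); rewrite negbK.
        have HKi : (K <= m' i)%N := kdiv (Km i) (forallP Hd i) Hi.
        have Hbig : (K <= idxsum (vm m'))%N.
          apply: leq_trans HKi _; rewrite /idxsum (bigD1 i) //=; exact: leq_addr.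
        rewrite -qR1 exprMn mulrCA mulrA [X in _ <= X]mulrA.
        apply: ler_wpM2r; first by apply: exprn_ge0; exact: ltW.
        apply: ler_wpM2r; first exact: cabs_ge0.
        exact: (ler_wiXn2l q0 (ltW q1) Hbig).
      apply: le_trans (sum_pred_le _ _) _.
        move=> m'; apply: mulr_ge0; first exact: exprn_ge0.
        apply: mulr_ge0; first exact: cabs_ge0.
        by apply: prodr_ge0 => i _; apply: exprn_ge0; exact: cabs_ge0.
      rewrite -mulr_sumr mulrC ler_wpM2r ?exprn_ge0 //; exact: HM1.
    rewrite Hx1; apply: le_trans (cabsD _ _ _) _; apply: lerD => //.
    have -> : cabs (- T) = cabs T by apply: complexI; rewrite !cabsC normrN.
    exact: HT.
  have Hl : ((fun N => KR^-1 * \sum_j cabs (Fpartial rho a (z j) N) + M1 * q ^+ K) @ \oo -->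
     KR^-1 * \sum_j cabs (Fval rho a (z j)) + M1 * q ^+ K)%classic.
    apply: cvgD; last exact: cvg_cst.
    apply: cvgM; first exact: cvg_cst.
    apply: cvg_fsum => j; apply: cabs_cvg; apply: Hconv => i; exact: Hj.
  apply: (le_trans (y := KR^-1 * \sum_j cabs (Fval rho a (z j)) + M1 * q ^+ K)).
    apply: (ler_cvg_to (cvg_cst x) Hl).
    exact: filterS (fun N (HN : (K0 <= N)%N) => stepN N HN) (nbhs_infty_ge K0).
  rewrite lerD2r.
  rewrite ler_pdivrMl //.
  apply: le_trans (ler_sum _ (fun j _ => Fnorm_ge (Hj j))) _.
  by rewrite sumr_const card_ffun !card_ord -mulr_natr natrX /KR mulrC.
have Hlim : ((fun K => Fnorm rho a + M1 * q ^+ K) @ \oo --> Fnorm rho a)%classic.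
  rewrite -[X in (_ --> X)%classic]addr0; apply: cvgD; first exact: cvg_cst.
  by have := @cvg_geometric _ M1 q; rewrite ger0_norm //; apply.
apply: (ler_cvg_to (cvg_cst x) Hlim).
by apply: filterS (nbhs_infty_ge K0) => K /= HK; exact: step.
Qed.

End Cauchy.
End PartB.


Lemma count_le (n L : nat) : (\sum_(t < L) nat_of_bool (t <= n)%N)%N = minn L n.+1.
Proof.
elim: L => [|L IH]; first by rewrite big_ord0.
rewrite big_ord_recr /= IH; case: (boolP (L <= n)%N) => H /=; lia.
Qed.

Lemma prod_boolR (R0 : realType) (I : finType) (P : pred I) :
  \prod_i ((nat_of_bool (P i))%:R : R0) = (nat_of_bool [forall i, P i])%:R.
Proof.
case: (boolP [forall i, P i]) => H.
  by rewrite big1 // => i _; move/forallP: H => ->.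
move/forallPn: H => [i Hi]; rewrite (bigD1 i) //= (negbTE Hi) mul0r //.
Qed.

Theorem mainTheorem8 (R : realType) (r : nat) (hr : (1 <= r)%N)
  (a : ('I_r -> nat) -> R[i]) (rho : R) (hrho : 0 < rho)
  (heps : exists eps : R, 0 < eps /\
     forall z : 'I_r -> R[i], (forall i, cabs (z i) <= rho^-1 + eps) ->
       F_abs_conv rho a z) :
  forall n : 'I_r -> nat,
    cabs (a n) <= (\prod_i (n i).+1)%:R * Fnorm rho a * rho ^+ idxsum n.
Proof.
move=> n.
pose L := (idxsum n).+1.
have HL : forall i, (n i < L)%N.
  by move=> i; rewrite ltnS /idxsum (bigD1 i) //=; exact: leq_addr.
rewrite (inversion a rho HL).
apply: le_trans (cabs_sum _ _ _ _ _) _.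
apply: (le_trans (y := \sum_(k : {ffun 'I_r -> 'I_L.+1} | [forall i, (k i <= n i)%N])
   Fnorm rho a * rho ^+ idxsum n)).
  apply: ler_sum => k /forallP Hk.
  have Hkn : (idxsum (vm k) <= idxsum n)%N by apply: leq_sum => i _; exact: Hk.
  rewrite cabsM cabsX cabsR (ger0_norm (ltW hrho)).
  apply: le_trans (ler_wpM2l (exprn_ge0 _ (ltW hrho)) (@cauchy_est _ _ a rho hrho heps (vm k))) _.
  by rewrite mulrCA -exprD subnK.
have -> : \sum_(k : {ffun 'I_r -> 'I_L.+1} | [forall i, (k i <= n i)%N])
   Fnorm rho a * rho ^+ idxsum n =
   (\sum_(k : {ffun 'I_r -> 'I_L.+1}) \prod_i ((nat_of_bool (k i <= n i)%N)%:R : R)) *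
   (Fnorm rho a * rho ^+ idxsum n).
  rewrite mulr_suml big_mkcond; apply: eq_bigr => k _.
  rewrite (@prod_boolR R _ (fun i => (k i <= n i)%N)).
  by case: ifP => _ /=; rewrite ?mul1r ?mul0r.
rewrite -(bigA_distr_bigA (fun i (t : 'I_L.+1) => ((nat_of_bool (t <= n i)%N)%:R : R))) /=.
have -> : \prod_(i < r) (\sum_(j < L.+1) ((nat_of_bool (j <= n i)%N)%:R : R)) =
    (\prod_i (n i).+1)%:R.
  rewrite natr_prod; apply: eq_bigr => i _; rewrite -natr_sum count_le.
  by congr (_%:R); have := HL i; lia.
by rewrite mulrA.
Qed.
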